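(* Let $(V,g)$ be a Euclidean vector space and $\mathfrak{g}\subseteq\mathfrak{so}(V)$ a Lie subalgebra. Let $V=V_0\oplus\bigoplus_{k=1}^dV_k$ be an orthogonal decomposition where $\mathfrak{g}$ acts trivially on $V_0$ and irreducibly on each $V_k$, $1\le k\le d$. For each $k$ let $\hat V_k=\bigoplus_{j\neq k,\,1\le j\le d}V_j$ and let $\hat{\mathfrak{g}}_k\subseteq\mathfrak{g}$ be the ideal consisting of elements of $\mathfrak{g}$ acting trivially on $\hat V_k$ (regarded as a subalgebra of $\mathfrak{so}(V_k)$). Then $$\Lambda^3V\cap(\Lambda^1V\otimes\mathfrak{g})=\bigoplus_{k=1}^d\Lambda^3V_k\cap(\Lambda^1V_k\otimes\hat{\mathfrak{g}}_k).$$
   Context: $\Lambda^2V$ is identified with $\mathfrak{so}(V)$ via $F\mapsto g(F\cdot,\cdot)$; $\Lambda^3W\cap(\Lambda^1W\otimes\mathfrak{h})=\{T\in\Lambda^3W:X\lrcorner T\in\mathfrak{h}\ \forall X\in W\}$. *)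

(* Defs.v *)
From HB Require Import structures.
From mathcomp Require Import all_boot all_order all_algebra.
Set Implicit Arguments. Unset Strict Implicit. Unset Printing Implicit Defensive.
Import Order.TTheory GRing.Theory Num.Theory.
Local Open Scope ring_scope.

(* Conventions:
   - the Euclidean space (V,g) is R^n (row vectors 'rV[R]_n) with the standard
     inner product g(u,v) = (u *m v^T) 0 0;
   - a matrix A : 'M_n acts on row vectors on the right: v |-> v *m A;
   - so(V) = skew matrices (A^T = - A);
   - subspaces are row spaces of matrices (mxalgebra, %MS);
   - a subspace g of 'M_n (Lie subalgebra) is the row space of a matrix
     g : 'M_(m, n*n) via mxvec. *)

Section Defs.
Variables (R : realFieldType) (n : nat).

Definition in_mxsp m (g : 'M[R]_(m, n * n)) (A : 'M[R]_n) : Prop :=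
  (mxvec A <= g)%MS.

Definition tensor3 := {ffun 'I_n * 'I_n * 'I_n -> R}.

Definition is_3form (T : tensor3) : Prop :=
  (forall i j k, T (i, j, k) = - T (j, i, k)) /\
  (forall i j k, T (i, j, k) = - T (i, k, j)).

(* X _| T, as an element of Lambda^2 V identified with so(V) via
   F |-> g(F.,.):  the matrix F with  g(Y *m F, Z) = T(X,Y,Z). *)
Definition contr (X : 'rV[R]_n) (T : tensor3) : 'M[R]_n :=
  \matrix_(j, k) \sum_(i < n) X 0 i * T (i, j, k).

(* Lambda^3 W cap (Lambda^1 W (x) h), for W = V:
   T in Lambda^3 V with X _| T in h for all X in V *)
Definition in_L3_g m (g : 'M[R]_(m, n * n)) (T : tensor3) : Prop :=
  is_3form T /\ forall X : 'rV[R]_n, in_mxsp g (contr X T).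

Definition in_ghat m d (g : 'M[R]_(m, n * n)) (Vk : 'I_d -> 'M[R]_n)
    (k : 'I_d) (A : 'M[R]_n) : Prop :=
  in_mxsp g A /\ forall j : 'I_d, j != k -> Vk j *m A = 0.

(* Lambda^3 V_k cap (Lambda^1 V_k (x) hat g_k), viewed inside Lambda^3 V:
   T is a 3-form on V which only depends on the V_k-components
   (X _| T = 0 for X orthogonal to V_k), and X _| T in hat g_k for X in V_k. *)
Definition in_L3k_ghat m d (g : 'M[R]_(m, n * n)) (Vk : 'I_d -> 'M[R]_n)
    (k : 'I_d) (T : tensor3) : Prop :=
  [/\ is_3form T,
      (forall X : 'rV[R]_n, X *m (Vk k)^T = 0 -> contr X T = 0) &
      (forall X : 'rV[R]_n, (X <= Vk k)%MS -> in_ghat g Vk k (contr X T))].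

End Defs.

(* Main.v *)
Require Import Defs.
From HB Require Import structures.
From mathcomp Require Import all_boot all_order all_algebra.
Import Order.TTheory GRing.Theory Num.Theory.
Set Implicit Arguments. Unset Strict Implicit.
Local Open Scope ring_scope.

Lemma contrDZ (R : realFieldType) (n : nat) (a : R) (X Y : 'rV[R]_n) (T : tensor3 R n) :
  contr (a *: X + Y) T = a *: contr X T + contr Y T.
Proof.
apply/matrixP=> j k; rewrite !mxE mulr_sumr -big_split /=.
by apply: eq_bigr => i _; rewrite !mxE mulrDl mulrA.
Qed.

Lemma contrD (R : realFieldType) (n : nat) (X Y : 'rV[R]_n) (T : tensor3 R n) :
  contr (X + Y) T = contr X T + contr Y T.
Proof. by have := contrDZ 1 X Y T; rewrite !scale1r. Qed.

Lemma contrN (R : realFieldType) (n : nat) (X : 'rV[R]_n) (T : tensor3 R n) :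
  contr (- X) T = - contr X T.
Proof.
have := contrDZ (-1) X 0 T.
rewrite addr0 scaleN1r => ->.
have -> : contr 0 T = 0 :> 'M_n.
  by apply/matrixP=> j k; rewrite !mxE big1 // => i _; rewrite mxE mul0r.
by rewrite addr0 scaleN1r.
Qed.

Lemma contr_sumX (R : realFieldType) (n : nat) (I : finType) (X : I -> 'rV[R]_n) (T : tensor3 R n) :
  contr (\sum_i X i) T = \sum_i contr (X i) T.
Proof.
apply/matrixP=> j k; rewrite !mxE summxE.
under eq_bigr do rewrite summxE mulr_suml.
rewrite exchange_big /=; apply: eq_bigr => i _; by rewrite mxE.
Qed.

Lemma contr_sumT (R : realFieldType) (n d : nat) (X : 'rV[R]_n) (Ts : 'I_d -> tensor3 R n) :
  contr X (\sum_(k < d) Ts k) = \sum_(k < d) contr X (Ts k).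
Proof.
apply/matrixP=> j l; rewrite !mxE summxE.
under eq_bigr do rewrite sum_ffunE mulr_sumr.
rewrite exchange_big /=; apply: eq_bigr => i _; by rewrite mxE.
Qed.

Lemma contr_delta (R : realFieldType) (n : nat) (i : 'I_n) (T : tensor3 R n) j k :
  contr (delta_mx 0 i) T j k = T (i, j, k).
Proof.
rewrite mxE (bigD1 i) //= big1 ?addr0; first by rewrite mxE !eqxx mul1r.
by move=> i' /negbTE ne; rewrite mxE ne andbF mul0r.
Qed.

Lemma contr_eqT (R : realFieldType) (n : nat) (T T' : tensor3 R n) :
  (forall X, contr X T = contr X T') -> T = T'.
Proof.
move=> H; apply/ffunP=> [[[i j] k]].
by rewrite -!contr_delta H.
Qed.

Lemma contrE (R : realFieldType) (n : nat) (X : 'rV[R]_n) (T : tensor3 R n) j l :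
  contr X T j l = \sum_(i < n) X 0 i * T (i, j, l).
Proof. by rewrite mxE. Qed.

Lemma contr_A1 (R : realFieldType) (n : nat) (T : tensor3 R n) (X Y : 'rV[R]_n) :
  is_3form T -> Y *m contr X T = - (X *m contr Y T).
Proof.
move=> [H1 _]; apply/matrixP=> z l; rewrite !mxE -sumrN.
under eq_bigr do rewrite contrE mulr_sumr.
under [RHS]eq_bigr do rewrite contrE mulr_sumr -sumrN.
rewrite exchange_big /=; apply: eq_bigr => i _; apply: eq_bigr => j _.
by rewrite (H1 j i l) !mulrN opprK ord1 mulrCA.
Qed.

Lemma contr_A2 (R : realFieldType) (n : nat) (T : tensor3 R n) (X : 'rV[R]_n) :
  is_3form T -> (contr X T)^T = - contr X T.
Proof.
move=> [_ H2]; apply/matrixP=> j l; rewrite mxE [in RHS]mxE !contrE -sumrN.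
by apply: eq_bigr => i _; rewrite H2 mulrN.
Qed.
Definition pb (R : realFieldType) (n : nat) (P : 'M[R]_n) (T : tensor3 R n) : tensor3 R n :=
  [ffun x => (P *m contr (row x.1.1 P) T *m P^T) x.1.2 x.2].

Lemma contrZ (R : realFieldType) (n : nat) (a : R) (X : 'rV[R]_n) (T : tensor3 R n) :
  contr (a *: X) T = a *: contr X T.
Proof.
have := contrDZ a X 0 T; rewrite addr0 => ->.
have -> : contr 0 T = 0 :> 'M_n.
  by apply/matrixP=> j k; rewrite !mxE big1 // => i _; rewrite mxE mul0r.
by rewrite addr0.
Qed.

Lemma contr_pb (R : realFieldType) (n : nat) (P : 'M[R]_n) (T : tensor3 R n) X :
  contr X (pb P T) = P *m contr (X *m P) T *m P^T.
Proof.
rewrite mulmx_sum_row contr_sumX mulmx_sumr mulmx_suml.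
apply/matrixP=> j l; rewrite contrE summxE; apply: eq_bigr => i _.
rewrite ffunE /= contrZ -scalemxAr -scalemxAl. by rewrite [in RHS]mxE.
Qed.

Lemma rowentry (R : Type) (m n : nat) (A : 'M[R]_(m, n)) j k : row j A 0 k = A j k.
Proof. by rewrite mxE. Qed.

Lemma trentry (R : Type) (m n : nat) (A : 'M[R]_(m, n)) j k : A^T j k = A k j.
Proof. by rewrite mxE. Qed.

Lemma oppentry (R : realFieldType) (m n : nat) (A : 'M[R]_(m, n)) j k : (- A) j k = - A j k.
Proof. by rewrite mxE. Qed.

Lemma pb_3form (R : realFieldType) (n : nat) (P : 'M[R]_n) (T : tensor3 R n) :
  is_3form T -> is_3form (pb P T).
Proof.
move=> HT; split=> i j k; rewrite !ffunE /=.
- have E : row j (P *m contr (row i P) T *m P^T) = - row i (P *m contr (row j P) T *m P^T).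
    by rewrite !row_mul (contr_A1 _ _ HT) mulNmx.
  by rewrite -rowentry E mxE rowentry.
- have E : (P *m contr (row i P) T *m P^T)^T = - (P *m contr (row i P) T *m P^T).
    by rewrite !trmx_mul trmxK contr_A2 // mulNmx mulmxN mulmxA.
  have := congr1 (fun M : 'M_n => M k j) E; rewrite /= trentry oppentry => ->.
  by [].
Qed.

Lemma in_mxsp0 (R : realFieldType) (n m : nat) (g : 'M[R]_(m, n * n)) : in_mxsp g 0.
Proof. by rewrite /in_mxsp linear0 sub0mx. Qed.

Lemma in_mxspD (R : realFieldType) (n m : nat) (g : 'M[R]_(m, n * n)) A B :
  in_mxsp g A -> in_mxsp g B -> in_mxsp g (A + B).
Proof. by rewrite /in_mxsp linearD; apply: addmx_sub. Qed.

Lemma in_mxspN (R : realFieldType) (n m : nat) (g : 'M[R]_(m, n * n)) A :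
  in_mxsp g A -> in_mxsp g (- A).
Proof. by rewrite /in_mxsp linearN eqmx_opp. Qed.

Lemma in_mxsp_sum (R : realFieldType) (n m d : nat) (g : 'M[R]_(m, n * n)) (A : 'I_d -> 'M_n) :
  (forall k, in_mxsp g (A k)) -> in_mxsp g (\sum_k A k).
Proof. by move=> H; rewrite /in_mxsp linear_sum; apply: summx_sub => k _; apply: H. Qed.

Lemma orth_sub (R : realFieldType) (n m1 m2 p1 p2 : nat) (A : 'M[R]_(m1, n)) (B : 'M[R]_(m2, n))
   (V : 'M[R]_(p1, n)) (V' : 'M[R]_(p2, n)) :
  (A <= V)%MS -> (B <= V')%MS -> V *m V'^T = 0 -> A *m B^T = 0.
Proof.
move=> /submxP[D ->] /submxP[D' ->] H.
by rewrite trmx_mul mulmxA -(mulmxA D) H mulmx0 mul0mx.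
Qed.

Lemma Psym (R : realFieldType) (n : nat) (I : finType) (Vo Wo : I -> 'M[R]_n)
  (Hort : forall a b, a != b -> Vo a *m (Vo b)^T = 0)
  (Hsum : \sum_a Wo a *m Vo a = 1%:M) a :
  (Wo a *m Vo a)^T = Wo a *m Vo a.
Proof.
have E : Wo a *m Vo a = (Wo a *m Vo a) *m (Wo a *m Vo a)^T.
  rewrite -{1}[Wo a *m Vo a]mulmx1 -trmx1 -Hsum raddf_sum mulmx_sumr.
  rewrite (bigD1 a) //= big1 ?addr0 // => b nba.
  apply: (orth_sub (V := Vo a) (V' := Vo b)); rewrite ?submxMl //.
  by apply: Hort; rewrite eq_sym.
by rewrite E trmx_mul trmxK.
Qed.

Lemma Pkill (R : realFieldType) (n p : nat) (I : finType) (Vo Wo : I -> 'M[R]_n)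
  (Hort : forall a b, a != b -> Vo a *m (Vo b)^T = 0)
  (Hsum : \sum_a Wo a *m Vo a = 1%:M) a b (r : 'M[R]_(p, n)) :
  (r <= Vo a)%MS -> b != a -> r *m (Wo b *m Vo b) = 0.
Proof.
move=> ra nba; rewrite -(Psym Hort Hsum).
apply: (orth_sub ra (submxMl _ _)); apply: Hort; by rewrite eq_sym.
Qed.

Lemma Pfix (R : realFieldType) (n p : nat) (I : finType) (Vo Wo : I -> 'M[R]_n)
  (Hort : forall a b, a != b -> Vo a *m (Vo b)^T = 0)
  (Hsum : \sum_a Wo a *m Vo a = 1%:M) a (r : 'M[R]_(p, n)) :
  (r <= Vo a)%MS -> r *m (Wo a *m Vo a) = r.
Proof.
move=> ra; rewrite -{2}[r]mulmx1 -Hsum mulmx_sumr (bigD1 a) //= big1 ?addr0 //.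
by move=> b nba; apply: (Pkill Hort Hsum ra).
Qed.

Lemma Pdecomp (R : realFieldType) (n p : nat) (I : finType) (Vo Wo : I -> 'M[R]_n)
  (Hsum : \sum_a Wo a *m Vo a = 1%:M) (r : 'M[R]_(p, n)) :
  r = \sum_a r *m (Wo a *m Vo a).
Proof. by rewrite -mulmx_sumr Hsum mulmx1. Qed.

Lemma Pdecompl (R : realFieldType) (n p : nat) (I : finType) (Vo Wo : I -> 'M[R]_n)
  (Hsum : \sum_a Wo a *m Vo a = 1%:M) (r : 'M[R]_(n, p)) :
  r = \sum_a (Wo a *m Vo a) *m r.
Proof. by rewrite -mulmx_suml Hsum mul1mx. Qed.

Lemma contr0X (R : realFieldType) (n : nat) (T : tensor3 R n) : contr 0 T = 0.
Proof. by apply/matrixP=> j k; rewrite !mxE big1 // => i _; rewrite mxE mul0r. Qed.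

Lemma contr0T (R : realFieldType) (n : nat) (X : 'rV[R]_n) : contr X (0 : tensor3 R n) = 0.
Proof. by apply/matrixP=> j k; rewrite !mxE big1 // => i _; rewrite ffunE mulr0. Qed.
Unset Implicit Arguments.

Theorem proposition3p1 (R : realFieldType) (n m d : nat)
  (g : 'M[R]_(m, n * n)) (V0 : 'M[R]_n) (Vk : 'I_d -> 'M[R]_n)
  (g_skew : forall A : 'M[R]_n, in_mxsp g A -> A^T = - A)
  (g_bracket : forall A B : 'M[R]_n, in_mxsp g A -> in_mxsp g B ->
      in_mxsp g (A *m B - B *m A))
  (V_full : row_full (V0 + \sum_(k < d) Vk k)%MS)
  (V_orth0 : forall k : 'I_d, V0 *m (Vk k)^T = 0)
  (V_orth : forall k l : 'I_d, k != l -> Vk k *m (Vk l)^T = 0)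
  (g_triv0 : forall A : 'M[R]_n, in_mxsp g A -> V0 *m A = 0)
  (Vk_nz : forall k : 'I_d, Vk k != 0)
  (Vk_inv : forall (k : 'I_d) (A : 'M[R]_n), in_mxsp g A ->
      (Vk k *m A <= Vk k)%MS)
  (Vk_irr : forall (k : 'I_d) (W : 'M[R]_n), (W <= Vk k)%MS ->
      (forall A : 'M[R]_n, in_mxsp g A -> (W *m A <= W)%MS) ->
      W = 0 \/ (Vk k <= W)%MS) :
  (forall T : tensor3 R n,
     in_L3_g g T <->
     exists Ts : 'I_d -> tensor3 R n,
       (forall k, in_L3k_ghat g Vk k (Ts k)) /\ T = \sum_(k < d) Ts k)
  /\
  (forall Ts : 'I_d -> tensor3 R n,
     (forall k, in_L3k_ghat g Vk k (Ts k)) ->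
     \sum_(k < d) Ts k = 0 -> forall k, Ts k = 0).
Proof.
pose Vo (a : 'I_d.+1) := if unlift ord0 a is Some k then Vk k else V0.
have VoS k : Vo (lift ord0 k) = Vk k by rewrite /Vo liftK.
have Vo0 : Vo ord0 = V0 by rewrite /Vo unlift_none.
have Hort : forall a b, a != b -> Vo a *m (Vo b)^T = 0.
  move=> a b; case: (unliftP ord0 a) => [k ->|->]; case: (unliftP ord0 b) => [l ->|->];
    rewrite ?VoS ?Vo0 ?eqxx //.
  - by rewrite (inj_eq lift_inj); apply: V_orth.
  - by try move=> _; rewrite -[Vk k *m V0^T]trmxK trmx_mul trmxK V_orth0 trmx0.
have [Wo Hsum] : exists Wo : 'I_d.+1 -> 'M[R]_n, \sum_a Wo a *m Vo a = 1%:M.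
  have : (1%:M <= \sum_a Vo a)%MS.
    rewrite big_ord_recl Vo0.
    under eq_bigr do rewrite VoS.
    exact: submx_full.
  by move/sub_sumsmxP=> [u Hu]; exists u; rewrite Hu.
pose P a := Wo a *m Vo a.
have hP1 a : (P a)^T = P a by exact: Psym.
have hP2 a b p (r : 'M_(p, n)) : (r <= Vo a)%MS -> b != a -> r *m P b = 0.
  by move=> ra ba; exact: (Pkill Hort Hsum ra).
have hP3 a p (r : 'M_(p, n)) : (r <= Vo a)%MS -> r *m P a = r.
  by move=> ra; exact: (Pfix Hort Hsum ra).
have hPd p (r : 'M_(p, n)) : r = \sum_a r *m P a by exact: Pdecomp.
have hPdl p (r : 'M_(n, p)) : r = \sum_a P a *m r by exact: Pdecompl.
have hPsub a : (P a <= Vo a)%MS by exact: submxMl.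
have Vo_inv a p (Y : 'M_(p, n)) A : in_mxsp g A -> (Y <= Vo a)%MS -> (Y *m A <= Vo a)%MS.
  move=> gA; case: (unliftP ord0 a) => [k ->|->]; rewrite ?VoS ?Vo0.
  - by move=> YV; apply: submx_trans (Vk_inv k A gA); apply: submxMr.
  - by move=> /submxP[D ->]; rewrite -mulmxA g_triv0 // mulmx0 sub0mx.
have hXPsub (X : 'rV[R]_n) k : (X *m P (lift ord0 k) <= Vk k)%MS.
  by rewrite -(VoS k); apply: submx_trans (hPsub _); apply: submxMl.
have hG1 k X Tk : in_L3k_ghat g Vk k Tk -> contr X Tk = contr (X *m P (lift ord0 k)) Tk.
  case=> _ Hz _.
  rewrite -{1}(subrK (X *m P (lift ord0 k)) X) contrD Hz ?add0r //.
  rewrite mulmxBl -mulmxA -[P _]hP1 -trmx_mul (hP3 (lift ord0 k)) ?VoS ?subrr //.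
split.
- move=> T; split.
  + case=> HT3 Hg.
    have F0 X : (X <= V0)%MS -> contr X T = 0.
      move=> /submxP[D ->]; apply/row_matrixP => j.
      by rewrite row0 rowE (contr_A1 _ _ HT3) -mulmxA g_triv0 ?mulmx0 ?oppr0.
    have FK1 k X b : (X <= Vk k)%MS -> b != lift ord0 k -> P b *m contr X T = 0.
      move=> Xk bk; apply/row_matrixP => j; rewrite row0 row_mul.
      have E := contr_A1 X (row j (P b)) HT3.
      have s1 : (row j (P b) *m contr X T <= Vo b)%MS.
        apply: Vo_inv => //; exact: submx_trans (row_sub _ _) (hPsub _).
      have s2 : (row j (P b) *m contr X T <= Vo (lift ord0 k))%MS.
        by rewrite E eqmx_opp; apply: Vo_inv => //; rewrite VoS.
      by rewrite -(hP3 _ _ _ s1) (hP2 _ _ _ _ s2).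
    have FK2 k X b : (X <= Vk k)%MS -> b != lift ord0 k -> contr X T *m P b = 0.
      move=> Xk bk; apply: trmx_inj.
      by rewrite trmx_mul hP1 contr_A2 // mulmxN (FK1 k) // oppr0 trmx0.
    have FK k X : (X <= Vk k)%MS ->
        P (lift ord0 k) *m contr X T *m P (lift ord0 k) = contr X T.
      move=> Xk.
      have L : P (lift ord0 k) *m contr X T = contr X T.
        rewrite [RHS](hPdl _ (contr X T)) (bigD1 (lift ord0 k)) //= big1 ?addr0 //.
        by move=> b bk; rewrite (FK1 k).
      have L2 : contr X T *m P (lift ord0 k) = contr X T.
        rewrite [RHS](hPd _ (contr X T)) (bigD1 (lift ord0 k)) //= big1 ?addr0 //.
        by move=> b bk; rewrite (FK2 k).
      by rewrite L L2.
    exists (fun k => pb (P (lift ord0 k)) T); split.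
    * move=> k; split.
      -- exact: pb_3form.
      -- move=> X HX; rewrite contr_pb.
         have -> : X *m P (lift ord0 k) = 0.
           by rewrite -hP1 /P trmx_mul VoS mulmxA HX mul0mx.
         by rewrite contr0X mulmx0 mul0mx.
      -- move=> X HX; rewrite contr_pb hP1 (hP3 (lift ord0 k) _ X) ?VoS //.
         split; first by rewrite FK //; apply: Hg.
         move=> j jk.
         have Z : Vk j *m P (lift ord0 k) = 0.
           apply: (hP2 (lift ord0 j)); first by rewrite VoS.
           by rewrite (inj_eq lift_inj) eq_sym.
         by rewrite (mulmxA (Vk j) (P (lift ord0 k) *m contr X T)) (mulmxA (Vk j) (P (lift ord0 k))) Z !mul0mx.
    * apply: contr_eqT => X; rewrite contr_sumT.
      rewrite {1}(hPd _ X) big_ord_recl contrD contr_sumX F0 ?add0r; last first.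
        by rewrite -Vo0; apply: submx_trans (submxMl _ _) (hPsub _).
      apply: eq_bigr => k _; rewrite contr_pb hP1 (FK k _ (hXPsub X k)) //.
  + case=> Ts [HTs ->]; split.
    * split=> i j k; rewrite !sum_ffunE -sumrN; apply: eq_bigr => l _;
        by case: (HTs l) => [[H1 H2] _ _]; first [apply: H1 | apply: H2].
    * move=> X; rewrite contr_sumT; apply: in_mxsp_sum => k.
      rewrite (hG1 k _ _ (HTs k)).
      by case: (HTs k) => _ _ /(_ _ (hXPsub X k)) [].
- move=> Ts HTs H0 k; apply: contr_eqT => X.
  rewrite contr0T (hG1 k _ _ (HTs k)).
  have := congr1 (contr (X *m P (lift ord0 k))) H0.
  rewrite contr_sumT contr0T (bigD1 k) //= big1 ?addr0 // => l lk.
  case: (HTs l) => _ Hz _; apply: Hz.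
  apply: (orth_sub (hXPsub X k) (submx_refl (Vk l))).
  by apply: V_orth; rewrite eq_sym.
Qed.
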